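(* Let $\Sigma$ be a complete rational polyhedral fan in $\mathbb{R}^n$ with rays $\rho_1,\ldots,\rho_k$ and primitive ray generators $u_1,\ldots,u_k\in\mathbb{Z}^n$, and let $F=[u_1~\cdots~u_k]\in\mathbb{Z}^{n\times k}$. Let $Z\subset\mathbb{C}^k$ be the base locus and $G\subset(\mathbb{C}^* )^k$ the group of the Cox construction (see context). Let $P\in\mathbb{Z}^{k\times k}$, $Q\in\mathbb{Z}^{n\times n}$ be unimodular matrices with $PF^\top Q=\mathrm{diag}(s_1,\ldots,s_n)$ (a $k\times n$ matrix in Smith normal form, all $s_i\neq 0$), let $P'$ be the submatrix of the first $n$ rows and $P''$ the submatrix of the last $k-n$ rows of $P$, and let $W_i\subset\mathbb{C}^*$ be the group of $s_i$-th roots of unity. Then for every $z=(z_1,\ldots,z_k)\in\mathbb{C}^k\setminus Z$, the orbit $G\cdot z=\{(g_1z_1,\ldots,g_kz_k)\mid g\in G\}$ is parametrized by the map $$\Big(\bigoplus_{i=1}^n W_i\Big)\oplus(\mathbb{C}^* )^{k-n}\to\mathbb{C}^k\setminus Z,\qquad (w,\lambda)\mapsto\big(w^{P'_{:,1}}\lambda^{P''_{:,1}}z_1,\ \ldots,\ w^{P'_{:,k}}\lambda^{P''_{:,k}}z_k\big),$$ i.e. $G\cdot z$ is the image of this map.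
   Context: Notation: for a vector $v$ and integer vector $a$, $v^a=\prod_j v_j^{a_j}$; $P'_{:,i}$ and $P''_{:,i}$ denote the $i$-th columns of $P'$, $P''$. The base locus is $Z=V_{\mathbb{C}^k}(B)$ where $B\subset\mathbb{C}[x_1,\ldots,x_k]$ is the monomial ideal generated by $\prod_{i:\rho_i\not\subset\sigma}x_i$ for $\sigma$ ranging over the $n$-dimensional cones of $\Sigma$. The group $G$ is $G=\{g\in(\mathbb{C}^* )^k\mid g^{F_{1,:}}=\cdots=g^{F_{n,:}}=1\}$, where $F_{j,:}$ is the $j$-th row of $F$; it acts on $\mathbb{C}^k\setminus Z$ by coordinatewise multiplication. The toric variety $X_\Sigma$ is the quotient of $\mathbb{C}^k\setminus Z$ by $G$ via the toric morphism $\pi$ induced by $F$. *)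

(* Defs.v *)
(* Complex numbers are modelled as R[i] (mathcomp-real-closed)
   for R : realType (the complete archimedean ordered field, i.e. the reals). *)
From HB Require Import structures.
From mathcomp Require Import all_boot all_order all_algebra.
From mathcomp Require Import reals.
From mathcomp Require Import complex.
Set Implicit Arguments. Unset Strict Implicit. Unset Printing Implicit Defensive.
Import Order.TTheory GRing.Theory Num.Theory.
Local Open Scope ring_scope.

Section Fan.
Variables (R : realType) (n k : nat).
(* F : the n x k integer matrix whose columns are the ray generators u_1..u_k *)
Variable F : 'M[int]_(n, k).

Definition ugen (i : 'I_k) : 'cV[R]_n := map_mx (fun a : int => a%:~R) (col i F).

(* A cone of the fan is encoded by the set sigma of indices of the rays it
   contains; the cone itself is the conic hull of the corresponding u_i. *)
Definition cone (sigma : {set 'I_k}) : 'cV[R]_n -> Prop :=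
  fun x => exists a : 'I_k -> R,
    (forall i, 0 <= a i) /\ (forall i, i \notin sigma -> a i = 0) /\
    x = \sum_i a i *: ugen i.

Definition is_face (S C : 'cV[R]_n -> Prop) : Prop :=
  exists m : 'rV[R]_n, (forall x, C x -> 0 <= (m *m x) ord0 ord0) /\
    (forall x, S x <-> (C x /\ (m *m x) ord0 ord0 = 0)).

Definition cone_dim (sigma : {set 'I_k}) : nat :=
  \rank (\matrix_(i < k, j < n) (if i \in sigma then ugen i j ord0 else 0)).

Definition primitive (u : 'cV[int]_n) : Prop :=
  u != 0 /\ forall d : int, (forall j, (d %| u j ord0)%Z) -> `|d| = 1.

Definition complete_fan_with_rays (Sigma : {set {set 'I_k}}) : Prop :=
  (* each cone is encoded by all the rays it contains *)
  (forall sigma, sigma \in Sigma -> forall i, cone sigma (ugen i) -> i \in sigma) /\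
  (forall sigma, sigma \in Sigma -> forall x, cone sigma x -> cone sigma (- x) -> x = 0) /\
  (forall sigma, sigma \in Sigma -> forall S, is_face S (cone sigma) ->
     exists2 tau, tau \in Sigma & forall x, cone tau x <-> S x) /\
  (forall sigma tau, sigma \in Sigma -> tau \in Sigma ->
     is_face (fun x => cone sigma x /\ cone tau x) (cone sigma) /\
     is_face (fun x => cone sigma x /\ cone tau x) (cone tau)) /\
  (forall i, [set i] \in Sigma) /\
  (forall i j, (forall x, cone [set i] x <-> cone [set j] x) -> i = j) /\
  (forall sigma, sigma \in Sigma -> cone_dim sigma = 1%N ->
     exists i, forall x, cone sigma x <-> cone [set i] x) /\
  (forall i, primitive (col i F)) /\
  (forall x : 'cV[R]_n, exists2 sigma, sigma \in Sigma & cone sigma x).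
End Fan.

Section Cox.
Variables (C : fieldType) (n k : nat) (F : 'M[int]_(n, k)).

Definition mono (l : nat) (v : 'I_l -> C) (a : 'I_l -> int) : C :=
  \prod_j v j ^ a j.

Definition in_base_locus (R : realType) (Sigma : {set {set 'I_k}}) (z : 'I_k -> C) : Prop :=
  forall sigma, sigma \in Sigma -> @cone_dim R n k F sigma = n ->
    \prod_(i | i \notin sigma) z i = 0.

Definition in_G (g : 'I_k -> C) : Prop :=
  (forall i, g i != 0) /\ forall j : 'I_n, mono g (fun i => F j i) = 1.

Definition in_Gorbit (z y : 'I_k -> C) : Prop :=
  exists g, in_G g /\ forall i, y i = g i * z i.
End Cox.

(* Main.v *)
Require Import Defs.
From HB Require Import structures.
From mathcomp Require Import all_boot all_order all_algebra.
From mathcomp Require Import reals complex.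
Import Order.TTheory GRing.Theory Num.Theory.
Local Open Scope ring_scope.
Set Implicit Arguments. Unset Strict Implicit. Unset Printing Implicit Defensive.

Section Aux.
Variable K : fieldType.

Definition pw l p (h : 'I_l -> K) (A : 'M[int]_(l, p)) : 'I_p -> K :=
  fun i => mono h (fun j => A j i).

Lemma mono_ext l (u v : 'I_l -> K) a : (forall i, u i = v i) -> mono u a = mono v a.
Proof. by move=> e; rewrite /mono; apply: eq_bigr => i _; rewrite e. Qed.

Lemma mono_nz l (h : 'I_l -> K) a : (forall j, h j != 0) -> mono h a != 0.
Proof.
move=> nz; rewrite /mono; apply/prodf_neq0 => j _.
by rewrite expfz_neq0.
Qed.

Lemma pw_nz l p (h : 'I_l -> K) (A : 'M[int]_(l, p)) :
  (forall j, h j != 0) -> forall i, pw h A i != 0.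
Proof. by move=> nz i; apply: mono_nz. Qed.

Lemma pw_comp l p q (h : 'I_l -> K) (A : 'M[int]_(l, p)) (B : 'M[int]_(p, q)) :
  (forall j, h j != 0) -> forall i, pw (pw h A) B i = pw h (A *m B) i.
Proof.
move=> nz i; rewrite /pw /mono.
transitivity (\prod_(j < p) \prod_(l0 < l) h l0 ^ (A l0 j * B j i)).
  apply: eq_bigr => j _.
  rewrite (big_morph (fun x => x ^ B j i) (fun x y => expfzMl x y (B j i)) (exp1rz _ _)).
  by apply: eq_bigr => l0 _; rewrite exprz_exp.
rewrite exchange_big /=; apply: eq_bigr => l0 _; rewrite mxE.
have u : h l0 \is a GRing.unit by rewrite unitfE.
by rewrite (big_morph (fun x => h l0 ^ x) (exprzDr u) (expr0z _)).
Qed.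

Lemma mono_delta l (h : 'I_l -> K) a i :
  (forall j, j != i -> a j = 0) -> mono h a = h i ^ a i.
Proof.
move=> a0; rewrite /mono (bigD1 i) //= big1 ?mulr1 // => j /a0 ->.
by rewrite expr0z.
Qed.

Lemma pw1 l (h : 'I_l -> K) i : pw h 1%:M i = h i.
Proof.
rewrite /pw (@mono_delta _ h _ i); first by rewrite mxE eqxx expr1z.
by move=> j nj; rewrite mxE (negbTE nj).
Qed.

Lemma pw_one l p (h : 'I_l -> K) (A : 'M[int]_(l, p)) :
  (forall j, h j = 1) -> forall i, pw h A i = 1.
Proof.
move=> h1 i; rewrite /pw /mono big1 // => j _; by rewrite h1 exp1rz.
Qed.

Lemma mono_split n m (h : 'I_(n + m) -> K) a :
  mono h a = mono (fun j => h (lshift m j)) (fun j => a (lshift m j)) *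
             mono (fun j => h (rshift n j)) (fun j => a (rshift n j)).
Proof. by rewrite /mono big_split_ord. Qed.

End Aux.

Theorem lemma3p1 (R : realType) (n m : nat) (F : 'M[int]_(n, n + m))
  (Sigma : {set {set 'I_(n + m)}})
  (hfan : complete_fan_with_rays R F Sigma)
  (P : 'M[int]_(n + m)) (Q : 'M[int]_n) (s : 'I_n -> int)
  (hP : P \in unitmx) (hQ : Q \in unitmx)
  (hsnf : P *m F^T *m Q = \matrix_(i < n + m, j < n) (if val i == val j then s j else 0))
  (hs : forall j, s j != 0)
  (hs_pos : forall j, 0 < s j)
  (hs_div : forall j j' : 'I_n, (j <= j')%N -> (s j %| s j')%Z)
  (z : 'I_(n + m) -> R[i])
  (hz : ~ in_base_locus F R Sigma z) :
  forall y : 'I_(n + m) -> R[i],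
    in_Gorbit F z y <->
    exists (w : 'I_n -> R[i]) (lam : 'I_m -> R[i]),
      (forall j, w j ^ s j = 1) /\ (forall j, lam j != 0) /\
      forall i, y i = mono w (fun j => usubmx P j i) * mono lam (fun j => dsubmx P j i) * z i.
Proof.
set D := \matrix_(i < n + m, j < n) _ in hsnf.
have pwD : forall h : 'I_(n + m) -> R[i], forall j, pw h D j = h (lshift m j) ^ s j.
  move=> h j; rewrite /pw (@mono_delta _ _ h _ (lshift m j)); first by rewrite mxE eqxx.
  move=> l nl; rewrite mxE; case: eqP => // e; case/eqP: nl; exact: val_inj.
have key : forall h : 'I_(n + m) -> R[i], (forall j, h j != 0) ->
    (forall j, mono (pw h P) (fun i => F j i) = 1) <->
    (forall j : 'I_n, h (lshift m j) ^ s j = 1).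
  move=> h nz; split.
    move=> H j; rewrite -pwD -hsnf -(pw_comp _ _ nz).
    apply: pw_one => j'; rewrite -(pw_comp _ _ nz) -(H j') /pw.
    by rewrite /mono; apply: eq_bigr => i _; rewrite mxE.
  move=> H j.
  have E : mono (pw h P) (fun i => F j i) = pw (pw h P) F^T j.
    by rewrite /pw /mono; apply: eq_bigr => i _; rewrite mxE.
  have PF : P *m F^T = D *m invmx Q by rewrite -hsnf mulmxK.
  rewrite E (pw_comp _ _ nz) PF -(pw_comp _ _ nz).
  by apply: pw_one => j'; rewrite pwD H.
move=> y; split.
- case=> g [[gnz gG] ey].
  set h := pw g (invmx P).
  have hnz : forall j, h j != 0 by apply: pw_nz.
  have hP' : forall i, pw h P i = g i.
    by move=> i; rewrite /h pw_comp // mulVmx // pw1.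
  exists (fun j => h (lshift m j)), (fun j => h (rshift n j)); split; [|split].
  + apply/(key h hnz) => j; rewrite -(gG j); exact: mono_ext.
  + by move=> j; apply: hnz.
  + move=> i; rewrite ey -hP' /pw mono_split; congr (_ * _ * _);
      rewrite /mono; apply: eq_bigr => j _; by rewrite mxE.
- case=> w [lam [hw [hl ey]]].
  pose h := fun l : 'I_(n + m) => match split l with inl j => w j | inr j => lam j end.
  have hl1 : forall j, h (lshift m j) = w j.
    by move=> j; rewrite /h (unsplitK (inl _ j)).
  have hr1 : forall j, h (rshift n j) = lam j.
    by move=> j; rewrite /h (unsplitK (inr _ j)).
  have wnz : forall j, w j != 0.
    move=> j; apply/negP => /eqP w0; have := hw j.
    by rewrite w0 exp0rz (negbTE (hs j)) => /eqP; rewrite eq_sym /= oner_eq0.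
  have hnz : forall l, h l != 0 by move=> l; rewrite /h; case: split.
  exists (pw h P); split; [split|].
  + by apply: pw_nz.
  + by apply/(key h hnz) => j; rewrite hl1.
  + move=> i; rewrite ey /pw mono_split; congr (_ * _ * _);
      rewrite /mono; apply: eq_bigr => j _; by rewrite mxE ?hl1 ?hr1.
Qed.
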